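(* Let $R$ be a discrete valuation ring of characteristic $p>0$ with field of fractions $K$. Let $H_1$ and $H_2$ be primitively generated $R$-Hopf algebras of rank $p^n$, let $A\in M_n(R)$ be the matrix associated to $H_1$ and $B\in M_n(R)$ the matrix associated to $H_2$ (with respect to chosen $R$-bases of their modules of primitive elements). Then $H_1$ and $H_2$ are generically isomorphic if and only if there exists $\Theta=(\theta_{i,j})\in \mathrm{GL}_n(K)$ such that \[\Theta A = B\,\Theta^{(p)},\] where $\Theta^{(p)}=(\theta_{i,j}^p)$.
   Context: All Hopf algebras are commutative, cocommutative, finitely generated projective, of $p$-power rank. An element $t$ of a Hopf algebra is primitive if $\Delta(t)=t\otimes1+1\otimes t$; $\mathrm{Prim}(H)$ denotes the module of primitives; $H$ is primitively generated if generated as an algebra by its primitive elements. If $H$ is a primitively generated $R$-Hopf algebra of rank $p^n$ and $t_1,\dots,t_n$ is an $R$-basis of $\mathrm{Prim}(H)$, then $t_i^p=\sum_{j=1}^n a_{j,i}t_j$ for unique $a_{j,i}\in R$, and $A=(a_{j,i})$ (entry $a_{j,i}$ in row $j$, column $i$) is the matrix associated to $H$ with respect to this basis. Two $R$-Hopf algebras $H_1,H_2$ are generically isomorphic if $K\otimes_R H_1\cong K\otimes_R H_2$ as $K$-Hopf algebras (equivalently, they are Hopf orders in the same $K$-Hopf algebra). *)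

(* Defs.v *)
(* Free Hopf algebras of finite rank over a commutative ring,
   encoded by structure constants in a fixed basis e_0, ..., e_(m-1).
   Elements of H are row vectors 'rV[S]_m; elements of H (x) H are m x m
   matrices T (T i j = coefficient of e_i (x) e_j). *)
From HB Require Import structures.
From mathcomp Require Import all_boot all_order all_algebra.
Set Implicit Arguments. Unset Strict Implicit. Unset Printing Implicit Defensive.
Import Order.TTheory GRing.Theory Num.Theory.
Local Open Scope ring_scope.

Record hopf_data (S : Type) (m : nat) := HopfData {
  hm : 'I_m -> 'I_m -> 'I_m -> S;   (* e_i * e_j = \sum_k hm i j k e_k *)
  hu : 'rV[S]_m;                      (* the unit 1 *)
  hc : 'I_m -> 'I_m -> 'I_m -> S;   (* Delta e_k = \sum_(i,j) hc k i j e_i (x) e_j *)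
  he : 'I_m -> S;                    (* counit eps e_k *)
  hs : 'I_m -> 'I_m -> S            (* antipode S(e_i) = \sum_j hs i j e_j *)
}.

Section HopfOps.
Variables (S : comNzRingType) (m : nat) (H : hopf_data S m).

Definition hbasis (i : 'I_m) : 'rV[S]_m := delta_mx 0 i.

Definition hmul (x y : 'rV[S]_m) : 'rV[S]_m :=
  \row_k \sum_i \sum_j x 0 i * y 0 j * hm H i j k.

Definition hcom (x : 'rV[S]_m) : 'M[S]_m :=
  \matrix_(i, j) \sum_k x 0 k * hc H k i j.

Definition heps (x : 'rV[S]_m) : S := \sum_k x 0 k * he H k.

Definition hant (x : 'rV[S]_m) : 'rV[S]_m := \row_j \sum_i x 0 i * hs H i j.

Definition htens (x y : 'rV[S]_m) : 'M[S]_m := x^T *m y.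

Definition htmul (T U : 'M[S]_m) : 'M[S]_m :=
  \matrix_(k, l) \sum_i \sum_j \sum_i' \sum_j'
      T i j * U i' j' * hm H i i' k * hm H j j' l.

Definition hpow (x : 'rV[S]_m) (n : nat) : 'rV[S]_m := iter n (hmul x) (hu H).

Definition is_cc_hopf : Prop :=
  (forall x y z, hmul (hmul x y) z = hmul x (hmul y z)) /\
  (forall x y, hmul x y = hmul y x) /\
  (forall x, hmul (hu H) x = x) /\
  (forall x a b c, \sum_i hcom x i c * hc H i a b = \sum_j hcom x a j * hc H j b c) /\
  (forall x, hcom x = (hcom x)^T) /\
  (forall x, \row_j (\sum_i he H i * hcom x i j) = x) /\
  (forall x, \row_i (\sum_j hcom x i j * he H j) = x) /\
  (forall x y, hcom (hmul x y) = htmul (hcom x) (hcom y)) /\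
  hcom (hu H) = htens (hu H) (hu H) /\
  (forall x y, heps (hmul x y) = heps x * heps y) /\
  heps (hu H) = 1 /\
  (forall x, \sum_i \sum_j hcom x i j *: hmul (hant (hbasis i)) (hbasis j) = heps x *: hu H) /\
  (forall x, \sum_i \sum_j hcom x i j *: hmul (hbasis i) (hant (hbasis j)) = heps x *: hu H).

Definition primitive (t : 'rV[S]_m) : Prop :=
  hcom t = htens t (hu H) + htens (hu H) t.

Definition prim_generated : Prop :=
  forall P : 'rV[S]_m -> Prop,
    (forall t, primitive t -> P t) -> P (hu H) ->
    (forall x y, P x -> P y -> P (x + y)) ->
    (forall x y, P x -> P y -> P (hmul x y)) ->
    (forall a x, P x -> P (a *: x)) ->
    forall x, P x.

Definition prim_basis (n : nat) (t : 'I_n -> 'rV[S]_m) : Prop :=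
  [/\ (forall i, primitive (t i)),
      (forall c : 'I_n -> S, \sum_i c i *: t i = 0 -> forall i, c i = 0) &
      (forall x, primitive x -> exists c : 'I_n -> S, x = \sum_i c i *: t i)].

End HopfOps.

Definition hopf_map (S S' : Type) (f : S -> S') (m : nat) (H : hopf_data S m)
  : hopf_data S' m :=
  HopfData (fun i j k => f (hm H i j k)) (map_mx f (hu H))
           (fun k i j => f (hc H k i j)) (fun k => f (he H k))
           (fun i j => f (hs H i j)).

Definition hopf_iso (F : fieldType) (m : nat) (H1 H2 : hopf_data F m)
  (M : 'M[F]_m) : Prop :=
  [/\ M \in unitmx,
      (forall x y, hmul H2 (x *m M) (y *m M) = hmul H1 x y *m M),
      hu H1 *m M = hu H2,
      (forall x, hcom H2 (x *m M) = M^T *m hcom H1 x *m M) &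
      (forall x, heps H2 (x *m M) = heps H1 x)].

Definition is_dvr (R : idomainType) : Prop :=
  exists pi : R, [/\ pi != 0, pi \isn't a GRing.unit &
    forall a : R, a != 0 -> exists u k, u \is a GRing.unit /\ a = u * pi ^+ k].

Definition is_frac_field (R : idomainType) (K : fieldType) (f : {rmorphism R -> K}) : Prop :=
  injective f /\ forall x : K, exists a b : R, b != 0 /\ x = f a / f b.

Definition pg_hopf (R : comNzRingType) (p n : nat) (H : hopf_data R (p ^ n)) : Prop :=
  is_cc_hopf H /\ prim_generated H.

Definition assoc_matrix (R : comNzRingType) (p n m : nat) (H : hopf_data R m)
  (t : 'I_n -> 'rV[R]_m) (A : 'M[R]_n) : Prop :=
  prim_basis H t /\ forall i, hpow H (t i) p = \sum_j A j i *: t j.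

(* Main.v *)
Require Import Defs.
From HB Require Import structures.
From mathcomp Require Import all_boot all_order all_algebra ring zify.
Set Implicit Arguments. Unset Strict Implicit. Unset Printing Implicit Defensive.
Import GRing.Theory.
Local Open Scope ring_scope.

Section Bil.
Variables (S : comNzRingType) (m : nat) (H : hopf_data S m).
Lemma hmulDl x y z : hmul H (x + y) z = hmul H x z + hmul H y z.
Proof.
apply/rowP=> k; rewrite !mxE -big_split /=; apply: eq_bigr => i _.
rewrite -big_split; apply: eq_bigr => j _; by rewrite !mxE !mulrDl.
Qed.
Lemma hmulDr x y z : hmul H x (y + z) = hmul H x y + hmul H x z.
Proof.
apply/rowP=> k; rewrite !mxE -big_split /=; apply: eq_bigr => i _.
rewrite -big_split; apply: eq_bigr => j _; by rewrite !mxE mulrDr !mulrDl.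
Qed.
Lemma hmulZl a x y : hmul H (a *: x) y = a *: hmul H x y.
Proof.
apply/rowP=> k; rewrite !mxE mulr_sumr; apply: eq_bigr => i _.
rewrite mulr_sumr; apply: eq_bigr => j _; rewrite !mxE !mulrA; congr (_ * _); ring.
Qed.
Lemma hmulZr a x y : hmul H x (a *: y) = a *: hmul H x y.
Proof.
apply/rowP=> k; rewrite !mxE mulr_sumr; apply: eq_bigr => i _.
rewrite mulr_sumr; apply: eq_bigr => j _; rewrite !mxE !mulrA; congr (_ * _); ring.
Qed.
End Bil.

Definition ring_ax (F : comNzRingType) m (H : hopf_data F m) :=
  [/\ (forall x y z, hmul H (hmul H x y) z = hmul H x (hmul H y z)),
      (forall x y, hmul H x y = hmul H y x),
      (forall x, hmul H (hu H) x = x) & hu H != 0].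

Definition halg (F : comNzRingType) m (H : hopf_data F m) (hH : ring_ax H) : Type := 'rV[F]_m.

Section Inst.
Variables (F : comNzRingType) (m : nat) (H : hopf_data F m) (hH : ring_ax H).
HB.instance Definition _ := GRing.Lmodule.on (halg hH).
Let hA : associative (hmul H : halg hH -> halg hH -> halg hH). Proof. by have [a _ _ _] := hH. Qed.
Let hC : commutative (hmul H : halg hH -> halg hH -> halg hH). Proof. by have [_ a _ _] := hH. Qed.
Let h1 : left_id (hu H : halg hH) (hmul H). Proof. by have [_ _ a _] := hH. Qed.
Let hD : left_distributive (hmul H : halg hH -> halg hH -> halg hH) +%R.
Proof. move=> x y z; exact: hmulDl. Qed.
Let hN : (hu H : halg hH) != 0. Proof. by have [_ _ _ a] := hH. Qed.
HB.instance Definition _ := GRing.Zmodule_isComNzRing.Build (halg hH) hA hC h1 hD hN.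
Let hZ a (u v : halg hH) : a *: (u * v) = (a *: u) * v.
Proof. by rewrite /GRing.mul /= hmulZl. Qed.
HB.instance Definition _ := GRing.Lmodule_isLalgebra.Build F (halg hH) hZ.
HB.instance Definition _ := GRing.Lalgebra_isComAlgebra.Build F (halg hH).
End Inst.


Section Span.
Variables (F : fieldType) (p n : nat) (H : hopf_data F ((p ^ n)%N)) (hH : ring_ax H).
Hypothesis pp : prime p.
Variables (t : 'I_n -> 'rV[F]_((p ^ n)%N)) (A : 'M[F]_n).
Hypothesis hpowt : forall i, ((t i : halg hH) ^+ p) = \sum_j A j i *: (t j : halg hH).

Local Notation alg := (halg hH).
Local Notation T := {ffun 'I_n -> 'I_p}.

Definition mono (a : T) : alg := \prod_i ((t i : alg) ^+ a i).

Lemma cardT : #|T| = (p ^ n)%N.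
Proof. by rewrite card_ffun !card_ord. Qed.

Definition idx (k : 'I_((p ^ n)%N)) : T := enum_val (cast_ord (esym cardT) k).
Definition idxr (a : T) : 'I_((p ^ n)%N) := cast_ord cardT (enum_rank a).
Lemma idxrK a : idx (idxr a) = a.
Proof. by rewrite /idx /idxr cast_ordK enum_rankK. Qed.

Definition Emx : 'M[F]_((p ^ n)%N) := \matrix_(k < (p ^ n)%N) (mono (idx k) : 'rV[F]_((p ^ n)%N)).

Lemma row_Emx a : row (idxr a) Emx = mono a.
Proof. by rewrite rowK idxrK. Qed.

Lemma mono_sub a : ((mono a : 'rV[F]_((p ^ n)%N)) <= Emx)%MS.
Proof. by rewrite -row_Emx row_sub. Qed.

Definition deg (a : T) := (\sum_i (a i : nat))%N.

Lemma monoD1 a i : mono a = (\prod_(j | j != i) (t j : alg) ^+ a j) * (t i : alg) ^+ a i.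
Proof. by rewrite /mono (bigD1 i) //= mulrC. Qed.

Definition upd (a : T) i (v : 'I_p) : T := [ffun j => if j == i then v else a j].

Lemma mono_upd a i v : mono (upd a i v) = (\prod_(j | j != i) (t j : alg) ^+ a j) * (t i : alg) ^+ v.
Proof.
rewrite (monoD1 _ i) /upd ffunE eqxx; congr (_ * _).
by apply: eq_bigr => j /negbTE hj; rewrite ffunE hj.
Qed.

Lemma deg_upd a i v : (deg (upd a i v) + a i = deg a + v)%N.
Proof.
rewrite /deg [in RHS](bigD1 i) //= (bigD1 i) //= /upd ffunE eqxx.
rewrite (eq_bigr (fun j => (a j : nat))); last first.
  by move=> j /negbTE hj; rewrite ffunE hj.
move: (\sum_(_ | _) _)%N => S1; lia.
Qed.

Lemma mulS a i : (((mono a * (t i : alg))%R : 'rV[F]_((p ^ n)%N)) <= Emx)%MS.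
Proof.
have [N ha] := ubnP (deg a).
elim: N a i ha => [|N IH] a i ha; first by rewrite ltn0 in ha.
case: (ltnP (a i).+1 p) => h.
  have -> : mono a * (t i : alg) = mono (upd a i (Ordinal h)).
    by rewrite mono_upd (monoD1 a i) -mulrA -exprSr.
  exact: mono_sub.
have ai : (a i).+1 = p by apply/eqP; rewrite eqn_leq h ltn_ord.
pose z := mono (upd a i (Ordinal (prime_gt0 pp))).
have -> : mono a * (t i : alg) = \sum_j A j i *: (z * (t j : alg)).
  rewrite (monoD1 a i) -mulrA -exprSr ai hpowt /z mono_upd expr0 mulr1.
  rewrite mulr_sumr; apply: eq_bigr => j _; by rewrite scalerAr.
apply: summx_sub => j _; apply: scalemx_sub; apply: IH.
have := deg_upd a i (Ordinal (prime_gt0 pp)); rewrite /= addn0.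
have := prime_gt1 pp; lia.
Qed.

Lemma mono_mul_lt (a : T) i (h : ((a i).+1 < p)%N) : mono a * (t i : alg) = mono (upd a i (Ordinal h)).
Proof. by rewrite mono_upd (monoD1 a i) -mulrA -exprSr. Qed.

Lemma mono_mul_eq (a : T) i (h : (a i).+1 = p) : mono a * (t i : alg) =
  \sum_j A j i *: (mono (upd a i (Ordinal (prime_gt0 pp))) * (t j : alg)).
Proof.
rewrite (monoD1 a i) -mulrA -exprSr h hpowt mono_upd expr0 mulr1.
rewrite mulr_sumr; apply: eq_bigr => j _; by rewrite scalerAr.
Qed.

Lemma deg_upd0 (a : T) i : (a i).+1 = p -> (deg (upd a i (Ordinal (prime_gt0 pp))) < deg a)%N.
Proof.
move=> h; have := deg_upd a i (Ordinal (prime_gt0 pp)); rewrite /= addn0.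
have := prime_gt1 pp; lia.
Qed.

Definition a0 : T := [ffun => Ordinal (prime_gt0 pp)].
Lemma mono0 : mono a0 = 1.
Proof. by rewrite /mono big1 // => i _; rewrite ffunE expr0. Qed.

Lemma tS i : (t i <= Emx)%MS.
Proof. have := mulS a0 i; by rewrite mono0 mul1r. Qed.

Hypotheses (hpg : prim_generated H)
  (hspan : forall x, primitive H x -> exists c : 'I_n -> F, x = \sum_i c i *: t i).

Definition Pq (q : alg) := forall z : alg, ((z : 'rV[F]_((p ^ n)%N)) <= Emx)%MS -> (((z * q)%R : 'rV[F]_((p ^ n)%N)) <= Emx)%MS.

Lemma span_expand (w : 'rV[F]_((p ^ n)%N)) : (w <= Emx)%MS ->
  exists c : 'I_((p ^ n)%N) -> F, (w : alg) = \sum_k c k *: mono (idx k).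
Proof.
move/submxP=> [D ->]; exists (fun k => D 0 k); rewrite mulmx_sum_row.
by apply: eq_bigr => k _; rewrite rowK.
Qed.

Lemma S_sum (I : Type) (r : seq I) (P : pred I) (c : I -> F) (w : I -> alg) :
  (forall i, P i -> ((w i : 'rV[F]_((p ^ n)%N)) <= Emx)%MS) ->
  (((\sum_(i <- r | P i) c i *: w i)%R : 'rV[F]_((p ^ n)%N)) <= Emx)%MS.
Proof. move=> h; apply: summx_sub => i Pi; apply: scalemx_sub; exact: h. Qed.

Lemma S_mult i (w : alg) : ((w : 'rV[F]_((p ^ n)%N)) <= Emx)%MS -> (((w * (t i : alg))%R : 'rV[F]_((p ^ n)%N)) <= Emx)%MS.
Proof.
move/span_expand=> [c ->]; rewrite mulr_suml.
rewrite (eq_bigr (fun k => c k *: (mono (idx k) * (t i : alg)))); last first.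
  by move=> k _; rewrite scalerAl.
apply: S_sum => k _; exact: mulS.
Qed.

Lemma Pq_mono a : Pq (mono a).
Proof.
apply: (big_ind Pq).
- by move=> z hz; rewrite mulr1.
- by move=> x y hx hy z hz; rewrite mulrA; apply: hy; apply: hx.
move=> i _; elim: (a i : nat) => [|k IH] z hz; first by rewrite mulr1.
rewrite exprSr mulrA.
by apply: S_mult; apply: IH.
Qed.

Lemma Pq_span (y : alg) : ((y : 'rV[F]_((p ^ n)%N)) <= Emx)%MS -> Pq y.
Proof.
move/span_expand=> [c ->] z hz; rewrite mulr_sumr.
rewrite (eq_bigr (fun k => c k *: (z * mono (idx k)))); last first.
  by move=> k _; rewrite scalerAr.
apply: S_sum => k _; exact: Pq_mono.
Qed.

Lemma span_all (x : 'rV[F]_((p ^ n)%N)) : (x <= Emx)%MS.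
Proof.
apply: (hpg (P := fun x : 'rV[F]_((p ^ n)%N) => (x <= Emx)%MS)).
- move=> y /hspan [c ->]; apply: S_sum => i _; exact: tS.
- by rewrite -[hu H]/(1 : alg) -mono0 mono_sub.
- by move=> x1 y1 hx hy; apply: addmx_sub.
- by move=> x1 y1 hx hy; apply: (Pq_span hy hx).
- by move=> c x1 hx; apply: scalemx_sub.
Qed.

Lemma Emx_unit : Emx \in unitmx.
Proof.
rewrite -row_full_unit -sub1mx; apply/row_subP => i; exact: span_all.
Qed.
End Span.
Section Lin.
Variables (S : comNzRingType) (m : nat) (H : hopf_data S m).

Lemma hcomD x y : hcom H (x + y) = hcom H x + hcom H y.
Proof.
apply/matrixP=> i j; rewrite !mxE -big_split; apply: eq_bigr => k _.
by rewrite !mxE mulrDl.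
Qed.
Lemma hcomZ a x : hcom H (a *: x) = a *: hcom H x.
Proof.
apply/matrixP=> i j; rewrite !mxE mulr_sumr; apply: eq_bigr => k _.
by rewrite !mxE mulrA.
Qed.
Lemma hcom0 : hcom H 0 = 0.
Proof. by rewrite -(scale0r 0) hcomZ scale0r. Qed.
Lemma hcom_sum (I : Type) (r : seq I) (P : pred I) (F : I -> 'rV[S]_m) :
  hcom H (\sum_(i <- r | P i) F i) = \sum_(i <- r | P i) hcom H (F i).
Proof. exact: (big_morph _ hcomD hcom0). Qed.

Lemma hepsD x y : heps H (x + y) = heps H x + heps H y.
Proof. rewrite /heps -big_split; apply: eq_bigr => k _. by rewrite !mxE mulrDl. Qed.
Lemma hepsZ a x : heps H (a *: x) = a * heps H x.
Proof. rewrite /heps mulr_sumr; apply: eq_bigr => k _. by rewrite !mxE mulrA. Qed.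
Lemma heps0 : heps H 0 = 0.
Proof. by rewrite -(scale0r 0) hepsZ mul0r. Qed.
Lemma heps_sum (I : Type) (r : seq I) (P : pred I) (F : I -> 'rV[S]_m) :
  heps H (\sum_(i <- r | P i) F i) = \sum_(i <- r | P i) heps H (F i).
Proof. exact: (big_morph _ hepsD heps0). Qed.

Lemma htmulDl T1 T2 U : htmul H (T1 + T2) U = htmul H T1 U + htmul H T2 U.
Proof.
apply/matrixP=> k l; rewrite !mxE -big_split; apply: eq_bigr => i _.
rewrite -big_split; apply: eq_bigr => j _.
rewrite -big_split; apply: eq_bigr => i' _.
rewrite -big_split; apply: eq_bigr => j' _.
by rewrite !mxE !mulrDl.
Qed.
Lemma htmulDr T U1 U2 : htmul H T (U1 + U2) = htmul H T U1 + htmul H T U2.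
Proof.
apply/matrixP=> k l; rewrite !mxE -big_split; apply: eq_bigr => i _.
rewrite -big_split; apply: eq_bigr => j _.
rewrite -big_split; apply: eq_bigr => i' _.
rewrite -big_split; apply: eq_bigr => j' _.
by rewrite !mxE mulrDr !mulrDl.
Qed.
Lemma htmulZl a T U : htmul H (a *: T) U = a *: htmul H T U.
Proof.
apply/matrixP=> k l; rewrite !mxE mulr_sumr; apply: eq_bigr => i _.
rewrite mulr_sumr; apply: eq_bigr => j _.
rewrite mulr_sumr; apply: eq_bigr => i' _.
rewrite mulr_sumr; apply: eq_bigr => j' _.
by rewrite !mxE !mulrA.
Qed.
Lemma htmulZr a T U : htmul H T (a *: U) = a *: htmul H T U.
Proof.
apply/matrixP=> k l; rewrite !mxE mulr_sumr; apply: eq_bigr => i _.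
rewrite mulr_sumr; apply: eq_bigr => j _.
rewrite mulr_sumr; apply: eq_bigr => i' _.
rewrite mulr_sumr; apply: eq_bigr => j' _.
rewrite !mxE !mulrA; congr (_ * _ * _); ring.
Qed.
Lemma htmul0l U : htmul H 0 U = 0.
Proof.
apply/matrixP=> k l; rewrite !mxE; apply: big1 => i _; apply: big1 => j _.
by apply: big1 => i' _; apply: big1 => j' _; rewrite !mxE !mul0r.
Qed.
Lemma htmul0r U : htmul H U 0 = 0.
Proof.
apply/matrixP=> k l; rewrite !mxE; apply: big1 => i _; apply: big1 => j _.
by apply: big1 => i' _; apply: big1 => j' _; rewrite !mxE mulr0 !mul0r.
Qed.
Lemma htmul_suml (I : Type) (r : seq I) (P : pred I) (F : I -> 'M[S]_m) U :
  htmul H (\sum_(i <- r | P i) F i) U = \sum_(i <- r | P i) htmul H (F i) U.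
Proof. exact: (big_morph (fun T => htmul H T U) (fun a b => htmulDl a b U) (htmul0l U)). Qed.
Lemma htmul_sumr (I : Type) (r : seq I) (P : pred I) (F : I -> 'M[S]_m) U :
  htmul H U (\sum_(i <- r | P i) F i) = \sum_(i <- r | P i) htmul H U (F i).
Proof. exact: (big_morph (fun T => htmul H U T) (htmulDr U) (htmul0r U)). Qed.

Lemma htensE (a b : 'rV[S]_m) i j : htens a b i j = a 0 i * b 0 j.
Proof. by rewrite !mxE big_ord1 !mxE. Qed.

Lemma htmul_tens (a b c d : 'rV[S]_m) :
  htmul H (htens a b) (htens c d) = htens (hmul H a c) (hmul H b d).
Proof.
apply/matrixP=> k l; rewrite htensE !mxE.
rewrite mulr_suml; apply: eq_bigr => i _; rewrite mulr_suml.
rewrite exchange_big /=; apply: eq_bigr => i' _.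
rewrite mulr_sumr; apply: eq_bigr => j _; rewrite mulr_sumr.
apply: eq_bigr => j' _; rewrite !htensE; ring.
Qed.

Lemma tens_decomp (T : 'M[S]_m) :
  T = \sum_i \sum_j T i j *: htens (hbasis S i) (hbasis S j).
Proof.
rewrite {1}(matrix_sum_delta T); apply: eq_bigr => i _; apply: eq_bigr => j _.
by rewrite /htens /hbasis trmx_delta mul_delta_mx.
Qed.

Lemma htmul_sums (a : 'I_m -> 'rV[S]_m) (T U : 'M[S]_m) :
  htmul H (\sum_i \sum_j T i j *: htens (a i) (a j))
          (\sum_k \sum_l U k l *: htens (a k) (a l)) =
  \sum_i \sum_j \sum_k \sum_l (T i j * U k l) *:
      htens (hmul H (a i) (a k)) (hmul H (a j) (a l)).
Proof.
rewrite htmul_suml; apply: eq_bigr => i _; rewrite htmul_suml; apply: eq_bigr => j _.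
rewrite htmulZl htmul_sumr scaler_sumr; apply: eq_bigr => k _.
rewrite htmul_sumr scaler_sumr; apply: eq_bigr => l _.
by rewrite htmulZr htmul_tens scalerA.
Qed.

Definition psi (M : 'M[S]_m) (T : 'M[S]_m) := M^T *m T *m M.
Lemma psi_sum M (I : Type) (r : seq I) (P : pred I) (F : I -> 'M[S]_m) :
  psi M (\sum_(i <- r | P i) F i) = \sum_(i <- r | P i) psi M (F i).
Proof. by rewrite /psi mulmx_sumr mulmx_suml. Qed.
Lemma psiZ M a T : psi M (a *: T) = a *: psi M T.
Proof. by rewrite /psi -scalemxAr -scalemxAl. Qed.
Lemma psiD M T U : psi M (T + U) = psi M T + psi M U.
Proof. by rewrite /psi mulmxDr mulmxDl. Qed.
Lemma psi_tens M a b : psi M (htens a b) = htens (a *m M) (b *m M).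
Proof. by rewrite /psi /htens trmx_mul !mulmxA. Qed.

Lemma primitive_lin n (s : 'I_n -> 'rV[S]_m) (c : 'I_n -> S) :
  (forall i, primitive H (s i)) -> primitive H (\sum_i c i *: s i).
Proof.
move=> hs; rewrite /primitive hcom_sum.
rewrite (eq_bigr (fun i => c i *: (htens (s i) (hu H) + htens (hu H) (s i)))); last first.
  by move=> i _; rewrite hcomZ hs.
apply/matrixP=> i j; rewrite summxE mxE !htensE !summxE.
rewrite mulr_suml mulr_sumr -big_split; apply: eq_bigr => k _.
rewrite mxE [X in _ * X]mxE !htensE !mxE; rewrite mulrDr; congr (_ + _); ring.
Qed.
End Lin.

Section Conj.
Variables (S : comNzRingType) (m : nat) (H1 H2 : hopf_data S m) (M : 'M[S]_m).
Hypothesis hM : forall a b, hmul H2 (a *m M) (b *m M) = hmul H1 a b *m M.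

Lemma conj_htmul T U :
  htmul H2 (psi M T) (psi M U) = psi M (htmul H1 T U).
Proof.
rewrite (tens_decomp T) (tens_decomp U).
have E : forall V : 'M[S]_m, psi M (\sum_i \sum_j V i j *: htens (hbasis S i) (hbasis S j))
   = \sum_i \sum_j V i j *: htens (hbasis S i *m M) (hbasis S j *m M).
  move=> V; rewrite psi_sum; apply: eq_bigr => i _; rewrite psi_sum; apply: eq_bigr => j _.
  by rewrite psiZ psi_tens.
rewrite !E !htmul_sums psi_sum; apply: eq_bigr => i _; rewrite psi_sum; apply: eq_bigr => j _.
rewrite psi_sum; apply: eq_bigr => k _; rewrite psi_sum; apply: eq_bigr => l _.
by rewrite psiZ psi_tens !hM.
Qed.
End Conj.

Section Iso.
Variables (F : fieldType) (p n : nat) (pp : prime p).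
Variables (H1 H2 : hopf_data F (p ^ n)%N) (hH1 : ring_ax H1) (hH2 : ring_ax H2).
Variables (t s : 'I_n -> 'rV[F]_((p ^ n)%N)) (A : 'M[F]_n).
Hypotheses (hp1 : forall i, (t i : halg hH1) ^+ p = \sum_j A j i *: (t j : halg hH1))
  (hp2 : forall i, (s i : halg hH2) ^+ p = \sum_j A j i *: (s j : halg hH2))
  (hpg1 : prim_generated H1) (hpg2 : prim_generated H2)
  (hsp1 : forall x, primitive H1 x -> exists c : 'I_n -> F, x = \sum_i c i *: t i)
  (hsp2 : forall x, primitive H2 x -> exists c : 'I_n -> F, x = \sum_i c i *: s i).

Local Notation alg1 := (halg hH1).
Local Notation alg2 := (halg hH2).
Let E1 := Emx hH1 t.
Let E2 := Emx hH2 s.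
Definition isoM := invmx E1 *m E2.
Definition phi (x : alg1) : alg2 := x *m isoM.

Lemma E1u : E1 \in unitmx. Proof. exact: (Emx_unit pp hp1 hpg1 hsp1). Qed.
Lemma E2u : E2 \in unitmx. Proof. exact: (Emx_unit pp hp2 hpg2 hsp2). Qed.
Lemma isoM_unit : isoM \in unitmx.
Proof. by rewrite unitmx_mul unitmx_inv E1u E2u. Qed.

Lemma phi_mono a : phi (mono hH1 t a) = mono hH2 s a.
Proof.
rewrite /phi -(row_Emx hH1 t a) -row_mul /isoM mulKVmx ?E1u //.
exact: row_Emx.
Qed.

Lemma phiD (x y : alg1) : phi (x + y) = phi x + phi y.
Proof. exact: mulmxDl. Qed.
Lemma phiZ c (x : alg1) : phi (c *: x) = c *: phi x.
Proof. by rewrite /phi -scalemxAl. Qed.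
Lemma phi0 : phi 0 = 0.
Proof. exact: mul0mx. Qed.
Lemma phi_sum (I : Type) (r : seq I) (P : pred I) (G : I -> alg1) :
  phi (\sum_(i <- r | P i) G i) = \sum_(i <- r | P i) phi (G i).
Proof. exact: (big_morph _ phiD phi0). Qed.

Lemma phi1 : phi 1 = 1.
Proof. by rewrite -(mono0 hH1 pp t) phi_mono mono0. Qed.

Lemma phi_mul_mono a i : phi (mono hH1 t a * (t i : alg1)) = mono hH2 s a * (s i : alg2).
Proof.
have [N ha] := ubnP (deg a).
elim: N a i ha => [|N IH] a i ha; first by rewrite ltn0 in ha.
case: (ltnP (a i).+1 p) => h.
  by rewrite (mono_mul_lt hH1 t h) (mono_mul_lt hH2 s h) phi_mono.
have ai : (a i).+1 = p by apply/eqP; rewrite eqn_leq h ltn_ord.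
rewrite (mono_mul_eq pp hp1 ai) (mono_mul_eq pp hp2 ai) phi_sum.
apply: eq_bigr => j _; rewrite phiZ IH //.
have := deg_upd0 pp ai; lia.
Qed.

Lemma phi_mul_t (w : alg1) i : phi (w * (t i : alg1)) = phi w * (s i : alg2).
Proof.
have [c ->] := span_expand (span_all pp hp1 hpg1 hsp1 w).
rewrite mulr_suml !phi_sum mulr_suml; apply: eq_bigr => k _.
by rewrite -scalerAl !phiZ phi_mul_mono phi_mono scalerAl.
Qed.

Lemma phi_t i : phi (t i) = s i.
Proof. by have := phi_mul_t 1 i; rewrite !mul1r phi1 mul1r. Qed.

Lemma phi_mul (x y : alg1) : phi (x * y) = phi x * phi y.
Proof.
move: x; move: y; apply: (hpg1 (P := fun y : 'rV[F]_((p ^ n)%N) => forall x : alg1, phi (x * (y : alg1)) = phi x * phi y)).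
- move=> y /hsp1 [c ->] x.
  rewrite mulr_sumr !phi_sum mulr_sumr; apply: eq_bigr => i _.
  by rewrite -scalerAr !phiZ phi_mul_t phi_t scalerAr.
- by move=> x; rewrite [hu H1]/(1 : alg1) mulr1 phi1 mulr1.
- move=> y1 y2 h1 h2 x.
  have -> : (y1 + y2 : 'rV[F]_((p ^ n)%N)) = ((y1 : alg1) + (y2 : alg1) : alg1) by [].
  by rewrite mulrDr !phiD h1 h2 mulrDr.
- move=> y1 y2 h1 h2 x.
  have -> : hmul H1 y1 y2 = ((y1 : alg1) * (y2 : alg1) : alg1) by [].
  by rewrite mulrA h2 h1 h2 mulrA.
- move=> c y h x.
  have -> : (c *: y : 'rV[F]_((p ^ n)%N)) = (c *: (y : alg1) : alg1) by [].
  by rewrite -scalerAr !phiZ h scalerAr.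
Qed.

Hypotheses (ht : forall i, primitive H1 (t i)) (hs : forall i, primitive H2 (s i))
  (he1 : forall i, heps H1 (t i) = 0) (he2 : forall i, heps H2 (s i) = 0)
  (hc1 : forall x y, hcom H1 (hmul H1 x y) = htmul H1 (hcom H1 x) (hcom H1 y))
  (hc2 : forall x y, hcom H2 (hmul H2 x y) = htmul H2 (hcom H2 x) (hcom H2 y))
  (hcu1 : hcom H1 (hu H1) = htens (hu H1) (hu H1))
  (hcu2 : hcom H2 (hu H2) = htens (hu H2) (hu H2))
  (hem1 : forall x y, heps H1 (hmul H1 x y) = heps H1 x * heps H1 y)
  (hem2 : forall x y, heps H2 (hmul H2 x y) = heps H2 x * heps H2 y)
  (heu1 : heps H1 (hu H1) = 1) (heu2 : heps H2 (hu H2) = 1).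

Lemma iso_main : hopf_iso H1 H2 isoM.
Proof.
have hM : forall x y, hmul H2 (x *m isoM) (y *m isoM) = hmul H1 x y *m isoM.
  by move=> x y; symmetry; exact: (phi_mul x y).
have hu12 : hu H1 *m isoM = hu H2 by exact: phi1.
split.
- exact: isoM_unit.
- exact: hM.
- exact: hu12.
- apply: (hpg1 (P := fun x => hcom H2 (x *m isoM) = psi isoM (hcom H1 x))).
  + move=> x hx; have [c ex] := hsp1 hx.
    have ephi : x *m isoM = \sum_i c i *: s i.
      rewrite ex -[_ *m isoM]/(phi _) phi_sum; apply: eq_bigr => i _.
      by rewrite phiZ phi_t.
    have hpx : primitive H2 (x *m isoM) by rewrite ephi; apply: primitive_lin.
    by rewrite hpx hx psiD !psi_tens hu12.
  + by rewrite hu12 hcu1 hcu2 psi_tens hu12.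
  + by move=> x y h1 h2; rewrite mulmxDl !hcomD h1 h2 psiD.
  + by move=> x y h1 h2; rewrite -hM hc2 h1 h2 (conj_htmul hM) hc1.
  + by move=> c x h; rewrite -scalemxAl !hcomZ h psiZ.
- apply: (hpg1 (P := fun x => heps H2 (x *m isoM) = heps H1 x)).
  + move=> x hx; have [c ex] := hsp1 hx.
    have ephi : x *m isoM = \sum_i c i *: s i.
      rewrite ex -[_ *m isoM]/(phi _) phi_sum; apply: eq_bigr => i _.
      by rewrite phiZ phi_t.
    rewrite ephi ex !heps_sum; apply: eq_bigr => i _.
    by rewrite !hepsZ he1 he2.
  + by rewrite hu12 heu1 heu2.
  + by move=> x y h1 h2; rewrite mulmxDl !hepsD h1 h2.
  + by move=> x y h1 h2; rewrite -hM hem2 hem1 h1 h2.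
  + by move=> c x h; rewrite -scalemxAl !hepsZ h.
Qed.
End Iso.

Lemma halg_pchar (F : fieldType) m (H : hopf_data F m) (hH : ring_ax H) p :
  p \in [pchar F] -> p \in [pchar (halg hH)].
Proof.
move=> hp; have pp := pcharf_prime hp.
rewrite inE pp /=; apply/eqP.
by rewrite -scaler_nat (pcharf0 hp) scale0r.
Qed.

Lemma frob_sum (F : fieldType) m (H : hopf_data F m) (hH : ring_ax H) p n
  (pch : p \in [pchar F]) (c : 'I_n -> F) (x : 'I_n -> halg hH) :
  (\sum_j c j *: x j) ^+ p = \sum_j c j ^+ p *: x j ^+ p.
Proof.
have pch' := halg_pchar hH pch.
rewrite -(pFrobenius_autE pch') rmorph_sum; apply: eq_bigr => j _.
by rewrite /= pFrobenius_autE exprZn.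
Qed.

Lemma sum_swap_scale (R : comNzRingType) (V : lmodType R) n (a : 'I_n -> R)
  (c : 'I_n -> 'I_n -> R) (v : 'I_n -> V) :
  \sum_j a j *: \sum_k c k j *: v k = \sum_k (\sum_j c k j * a j) *: v k.
Proof.
rewrite (eq_bigr (fun j => \sum_k (a j * c k j) *: v k)); last first.
  by move=> j _; rewrite scaler_sumr; apply: eq_bigr => k _; rewrite scalerA.
rewrite exchange_big /=; apply: eq_bigr => k _; rewrite scaler_suml.
by apply: eq_bigr => j _; rewrite mulrC.
Qed.

Section Backward.
Variables (F : fieldType) (p n : nat) (pch : p \in [pchar F]).
Variables (H1 H2 : hopf_data F (p ^ n)%N) (hH1 : ring_ax H1) (hH2 : ring_ax H2).
Variables (t s : 'I_n -> 'rV[F]_((p ^ n)%N)) (A B : 'M[F]_n).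
Hypotheses (hp1 : forall i, (t i : halg hH1) ^+ p = \sum_j A j i *: (t j : halg hH1))
  (hp2 : forall i, (s i : halg hH2) ^+ p = \sum_j B j i *: (s j : halg hH2))
  (hpg1 : prim_generated H1) (hpg2 : prim_generated H2)
  (hsp1 : forall x, primitive H1 x -> exists c : 'I_n -> F, x = \sum_i c i *: t i)
  (hsp2 : forall x, primitive H2 x -> exists c : 'I_n -> F, x = \sum_i c i *: s i)
  (ht : forall i, primitive H1 (t i)) (hs : forall i, primitive H2 (s i))
  (he1 : forall i, heps H1 (t i) = 0) (he2 : forall i, heps H2 (s i) = 0)
  (hc1 : forall x y, hcom H1 (hmul H1 x y) = htmul H1 (hcom H1 x) (hcom H1 y))
  (hc2 : forall x y, hcom H2 (hmul H2 x y) = htmul H2 (hcom H2 x) (hcom H2 y))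
  (hcu1 : hcom H1 (hu H1) = htens (hu H1) (hu H1))
  (hcu2 : hcom H2 (hu H2) = htens (hu H2) (hu H2))
  (hem1 : forall x y, heps H1 (hmul H1 x y) = heps H1 x * heps H1 y)
  (hem2 : forall x y, heps H2 (hmul H2 x y) = heps H2 x * heps H2 y)
  (heu1 : heps H1 (hu H1) = 1) (heu2 : heps H2 (hu H2) = 1).
Variables (Th : 'M[F]_n).
Hypotheses (hThu : Th \in unitmx) (hTh : Th *m A = B *m map_mx (fun x => x ^+ p) Th).

Lemma backward : exists M, hopf_iso H1 H2 M.
Proof.
have pp := pcharf_prime pch.
pose s' i := \sum_j Th j i *: s j.
have es' : forall i, (s' i : halg hH2) = \sum_j Th j i *: (s j : halg hH2) by [].
exists (isoM hH1 hH2 t s').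
apply: (iso_main pp hp1 _ hpg1 hpg2 hsp1 _ _ he1 _ hc1 hc2 hcu1 hcu2 hem1 hem2 heu1 heu2).
- move=> i.
  transitivity (\sum_k (\sum_j B k j * Th j i ^+ p) *: (s k : halg hH2)).
    rewrite es' frob_sum //.
    rewrite (eq_bigr (fun j => Th j i ^+ p *: \sum_k B k j *: (s k : halg hH2))); last first.
      by move=> j _; rewrite hp2.
    by rewrite sum_swap_scale.
  transitivity (\sum_j A j i *: \sum_k Th k j *: (s k : halg hH2)); last by [].
  rewrite sum_swap_scale; apply: eq_bigr => k _; congr (_ *: _).
  have E := congr1 (fun M : 'M[F]_n => M k i) hTh; rewrite /= !mxE in E.
  by rewrite E; apply: eq_bigr => j _; rewrite mxE.
- move=> x /hsp2 [d ->].
  exists (fun i => \sum_j invmx Th i j * d j).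
  rewrite sum_swap_scale; apply: eq_bigr => j _; congr (_ *: _).
  symmetry; transitivity (\sum_j' (Th *m invmx Th) j j' * d j').
    rewrite (eq_bigr (fun i => \sum_j' Th j i * invmx Th i j' * d j')); last first.
      by move=> i _; rewrite mulr_sumr; apply: eq_bigr => j' _; rewrite mulrA.
    rewrite exchange_big /=; apply: eq_bigr => j' _; rewrite mxE mulr_suml.
    done.
  rewrite mulmxV // (bigD1 j) //= big1 ?addr0; first by rewrite mxE eqxx mulr1n mul1r.
  by move=> j' hj'; rewrite mxE eq_sym (negbTE hj') mulr0n mul0r.
- by move=> i; apply: primitive_lin.
- move=> i; rewrite heps_sum big1 // => j _; by rewrite hepsZ he2 mulr0.
Qed.
End Backward.

Lemma coef_eq (R : comNzRingType) (V : lmodType R) n (v : 'I_n -> V) :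
  (forall c : 'I_n -> R, \sum_i c i *: v i = 0 -> forall i, c i = 0) ->
  forall a b : 'I_n -> R, \sum_i a i *: v i = \sum_i b i *: v i -> forall i, a i = b i.
Proof.
move=> hind a b e i; apply/eqP; rewrite -subr_eq0; apply/eqP.
apply: (hind (fun i => a i - b i)).
rewrite (eq_bigr (fun i => a i *: v i - b i *: v i)); last by move=> k _; rewrite scalerBl.
by rewrite sumrB e subrr.
Qed.

Lemma psi_inv (F : fieldType) m (M : 'M[F]_m) T : M \in unitmx -> psi (invmx M) (psi M T) = T.
Proof.
move=> hM; rewrite /psi !mulmxA -trmx_mul mulmxV // trmx1 mul1mx.
by rewrite -mulmxA mulmxV // mulmx1.
Qed.

Section Forward.
Variables (F : fieldType) (p n : nat) (pch : p \in [pchar F]).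
Variables (H1 H2 : hopf_data F (p ^ n)%N) (hH1 : ring_ax H1) (hH2 : ring_ax H2).
Variables (t s : 'I_n -> 'rV[F]_((p ^ n)%N)) (A B : 'M[F]_n).
Hypotheses (hp1 : forall i, (t i : halg hH1) ^+ p = \sum_j A j i *: (t j : halg hH1))
  (hp2 : forall i, (s i : halg hH2) ^+ p = \sum_j B j i *: (s j : halg hH2))
  (hsp1 : forall x, primitive H1 x -> exists c : 'I_n -> F, x = \sum_i c i *: t i)
  (hsp2 : forall x, primitive H2 x -> exists c : 'I_n -> F, x = \sum_i c i *: s i)
  (ht : forall i, primitive H1 (t i)) (hs : forall i, primitive H2 (s i))
  (hind1 : forall c : 'I_n -> F, \sum_i c i *: t i = 0 -> forall i, c i = 0)
  (hind2 : forall c : 'I_n -> F, \sum_i c i *: s i = 0 -> forall i, c i = 0).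
Variables (M : 'M[F]_((p ^ n)%N)) (hiso : hopf_iso H1 H2 M).

Lemma forward : exists Th : 'M[F]_n, Th \in unitmx /\
     Th *m A = B *m map_mx (fun x => x ^+ p) Th.
Proof.
have [Mu hmulM huM hcomM hepsM] := hiso.
have prim12 : forall x, primitive H1 x -> primitive H2 (x *m M).
  move=> x hx; rewrite /primitive hcomM hx.
  by rewrite -[M^T *m _ *m M]/(psi M _) psiD !psi_tens huM.
have prim21 : forall y, primitive H2 y -> primitive H1 (y *m invmx M).
  move=> y hy; rewrite /primitive.
  rewrite -[hcom H1 _](psi_inv _ Mu) -[psi M _]/(M^T *m _ *m M) -hcomM mulmxKV //.
  have hu21 : hu H2 *m invmx M = hu H1 by rewrite -huM mulmxK.
  by rewrite hy psiD !psi_tens hu21.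
have /fin_all_exists [c hc] : forall i, exists c : 'I_n -> F, t i *m M = \sum_j c j *: s j.
  move=> i; exact: hsp2 (prim12 _ (ht i)).
have /fin_all_exists [c' hc'] : forall j, exists c : 'I_n -> F, s j *m invmx M = \sum_k c k *: t k.
  move=> j; exact: hsp1 (prim21 _ (hs j)).
pose Th := \matrix_(j, i) c i j.
pose Th' := \matrix_(k, j) c' j k.
have hTh : Th' *m Th = 1%:M.
  apply/matrixP=> k i.
  have e : \sum_k (1%:M : 'M[F]_n) k i *: t k = \sum_k (Th' *m Th) k i *: t k.
    transitivity (t i).
      rewrite (bigD1 i) //= big1 ?addr0; first by rewrite mxE eqxx scale1r.
      by move=> k' hk'; rewrite mxE (negbTE hk') scale0r.
    rewrite -[t i](mulmxK Mu) hc mulmx_suml.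
    rewrite (eq_bigr (fun j => c i j *: \sum_k c' j k *: t k)); last first.
      by move=> j _; rewrite -scalemxAl hc'.
    rewrite sum_swap_scale; apply: eq_bigr => k' _; congr (_ *: _).
    by rewrite mxE; apply: eq_bigr => j _; rewrite !mxE.
  by rewrite (coef_eq hind1 e).
have Thu : Th \in unitmx by have [] := mulmx1_unit hTh.
exists Th; split => //.
apply/matrixP=> k i.
have phiX : forall (x : halg hH1) k, (x ^+ k : halg hH1) *m M = ((x *m M : halg hH2) ^+ k).
  move=> x; elim=> [|k' IH]; first by rewrite !expr0; exact: huM.
  by rewrite !exprS -IH; symmetry; exact: hmulM.
have e : \sum_k (Th *m A) k i *: (s k : halg hH2) = \sum_k (B *m map_mx (fun x => x ^+ p) Th) k i *: s k.
  transitivity (((t i : halg hH1) ^+ p : halg hH1) *m M).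
    symmetry; rewrite hp1 mulmx_suml.
    rewrite (eq_bigr (fun j => A j i *: \sum_k c j k *: (s k : halg hH2))); last first.
      by move=> j _; rewrite -scalemxAl hc.
    rewrite sum_swap_scale; apply: eq_bigr => k' _; congr (_ *: _).
    by rewrite mxE; apply: eq_bigr => j _; rewrite !mxE.
  rewrite phiX hc.
  transitivity ((\sum_j c i j *: (s j : halg hH2)) ^+ p); first by [].
  rewrite frob_sum //.
  rewrite (eq_bigr (fun j => c i j ^+ p *: \sum_k B k j *: (s k : halg hH2))); last first.
    by move=> j _; rewrite hp2.
  rewrite sum_swap_scale; apply: eq_bigr => k' _; congr (_ *: _).
  by rewrite mxE; apply: eq_bigr => j _; rewrite !mxE.
exact: (coef_eq hind2 e).
Qed.
End Forward.

Section Transfer.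
Variables (R : idomainType) (K : fieldType) (f : {rmorphism R -> K}).
Hypotheses (finj : injective f)
  (frac : forall x : K, exists a b : R, b != 0 /\ x = f a / f b).

Lemma f_neq0 b : b != 0 -> f b != 0.
Proof. by move=> hb; apply: contra hb => /eqP e; apply/eqP; apply: finj; rewrite e rmorph0. Qed.

Lemma map_inj k l : injective (map_mx f : 'M[R]_(k, l) -> 'M[K]_(k, l)).
Proof.
move=> x y e; apply/matrixP=> i j; apply: finj.
by have := congr1 (fun M : 'M[K]_(k, l) => M i j) e; rewrite !mxE.
Qed.

Lemma clear_den k (x : 'rV[K]_k) :
  exists (b : R) (y : 'rV[R]_k), b != 0 /\ x = (f b)^-1 *: map_mx f y.
Proof.
have /fin_all_exists [a ha] : forall j : 'I_k, exists a : R, exists b : R, b != 0 /\ x 0 j = f a / f b.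
  by move=> j; exact: frac.
have /fin_all_exists [b hb] := ha.
exists (\prod_j b j), (\row_j (a j * \prod_(l | l != j) b l)); split.
  by apply/prodf_neq0 => j _; have [] := hb j.
apply/rowP=> j; rewrite !mxE rmorphM !rmorph_prod (bigD1 j) //=.
have [bj0 ->] := hb j.
have hf := f_neq0 bj0.
have hP : \prod_(l | l != j) f (b l) != 0.
  by apply/prodf_neq0 => l _; apply: f_neq0; have [] := hb l.
move: hP; set P := \prod_(_ | _) _ => hP; field; by rewrite hf hP.
Qed.

Lemma clear_ind k (P : 'rV[K]_k -> Prop) :
  (forall y, P (map_mx f y)) -> (forall c x, P x -> P (c *: x)) -> forall x, P x.
Proof. by move=> h1 h2 x; have [b [y [_ ->]]] := clear_den x; apply: h2. Qed.

Section OneH.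
Variables (m : nat) (H : hopf_data R m).
Local Notation HK := (hopf_map f H).

Lemma map_hmul (x y : 'rV[R]_m) : hmul HK (map_mx f x) (map_mx f y) = map_mx f (hmul H x y).
Proof.
apply/rowP=> k; rewrite !mxE rmorph_sum; apply: eq_bigr => i _.
rewrite rmorph_sum; apply: eq_bigr => j _; by rewrite !mxE /= !rmorphM.
Qed.
Lemma map_hcom (x : 'rV[R]_m) : hcom HK (map_mx f x) = map_mx f (hcom H x).
Proof.
apply/matrixP=> i j; rewrite !mxE rmorph_sum; apply: eq_bigr => k _.
by rewrite !mxE /= rmorphM.
Qed.
Lemma map_heps (x : 'rV[R]_m) : heps HK (map_mx f x) = f (heps H x).
Proof.
rewrite /heps rmorph_sum; apply: eq_bigr => k _; by rewrite !mxE /= rmorphM.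
Qed.
Lemma map_htens (x y : 'rV[R]_m) : htens (map_mx f x) (map_mx f y) = map_mx f (htens x y).
Proof. by rewrite /htens map_mxM map_trmx. Qed.
Lemma map_htmul (T U : 'M[R]_m) : htmul HK (map_mx f T) (map_mx f U) = map_mx f (htmul H T U).
Proof.
apply/matrixP=> k l; rewrite !mxE rmorph_sum; apply: eq_bigr => i _.
rewrite rmorph_sum; apply: eq_bigr => j _.
rewrite rmorph_sum; apply: eq_bigr => i' _.
rewrite rmorph_sum; apply: eq_bigr => j' _.
by rewrite !mxE /= !rmorphM.
Qed.
Lemma map_hpow (x : 'rV[R]_m) k : hpow HK (map_mx f x) k = map_mx f (hpow H x k).
Proof. elim: k => [|k IH] //=; by rewrite IH map_hmul. Qed.

Lemma map_primitive (x : 'rV[R]_m) : primitive HK (map_mx f x) <-> primitive H x.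
Proof.
rewrite /primitive map_hcom [hu HK]/= !map_htens -map_mxD; split.
  exact: map_inj.
by move=> ->.
Qed.

Hypothesis hcc : is_cc_hopf H.

Lemma heps_prim x : primitive H x -> heps H x = 0.
Proof.
have [_ [_ [_ [_ [_ [hcl [_ [_ [_ [_ [heu _]]]]]]]]]]] := hcc.
move=> hx; have := hcl x; rewrite hx => e.
have e2 : heps H x *: hu H = 0.
  apply: (@addIr _ x); rewrite add0r -[in RHS]e; apply/rowP=> j; rewrite !mxE.
  rewrite (eq_bigr (fun i => he H i * x 0 i * hu H 0 j + he H i * hu H 0 i * x 0 j)); last first.
    by move=> i _; rewrite mxE !htensE mulrDr !mulrA.
  have h1 : forall z : 'rV[R]_m, \sum_i he H i * z 0 i = heps H z.
    by move=> z; apply: eq_bigr => i _; rewrite mulrC.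
  by rewrite big_split /= -!mulr_suml !h1 heu mul1r.
have hu0 : hu H != 0 by apply/eqP => e0; move: heu; rewrite e0 heps0 => /eqP; rewrite eq_sym oner_eq0.
by move/eqP: e2; rewrite scalemx_eq0 (negbTE hu0) orbF => /eqP.
Qed.

Lemma ringK : ring_ax HK.
Proof.
have [hA [hC [hU [_ [_ [_ [_ [_ [_ [_ [heu _]]]]]]]]]]] := hcc.
split.
- apply: clear_ind => [x0|c x IH] y z; last by rewrite !(hmulZl, hmulZr) IH.
  move: y z; apply: clear_ind => [y0|c y IH] z; last by rewrite !(hmulZl, hmulZr) IH.
  move: z; apply: clear_ind => [z0|c z IH]; last by rewrite !(hmulZl, hmulZr) IH.
  by rewrite !map_hmul hA.
- apply: clear_ind => [x0|c x IH] y; last by rewrite !(hmulZl, hmulZr) IH.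
  move: y; apply: clear_ind => [y0|c y IH]; last by rewrite !(hmulZl, hmulZr) IH.
  by rewrite !map_hmul hC.
- apply: clear_ind => [x0|c x IH]; last by rewrite !(hmulZl, hmulZr) IH.
  by rewrite [hu HK]/= map_hmul hU.
- have hu0 : hu H != 0 by apply/eqP => e0; move: heu; rewrite e0 heps0 => /eqP; rewrite eq_sym oner_eq0.
  apply: contra hu0 => /eqP e; apply/eqP; apply: (@map_inj 1 m).
  by rewrite [hu HK]/= in e; rewrite e map_mx0.
Qed.

Lemma hcK x y : hcom HK (hmul HK x y) = htmul HK (hcom HK x) (hcom HK y).
Proof.
have [_ [_ [_ [_ [_ [_ [_ [hcm _]]]]]]]] := hcc.
move: x y; apply: clear_ind => [x0|c x IH] y; last by rewrite !(hmulZl, hmulZr, hcomZ, htmulZl, htmulZr) IH.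
move: y; apply: clear_ind => [y0|c y IH]; last by rewrite !(hmulZl, hmulZr, hcomZ, htmulZl, htmulZr) IH.
by rewrite map_hmul !map_hcom map_htmul hcm.
Qed.

Lemma hcuK : hcom HK (hu HK) = htens (hu HK) (hu HK).
Proof.
have [_ [_ [_ [_ [_ [_ [_ [_ [hcu _]]]]]]]]] := hcc.
by rewrite [hu HK]/= map_hcom map_htens hcu.
Qed.

Lemma hemK x y : heps HK (hmul HK x y) = heps HK x * heps HK y.
Proof.
have [_ [_ [_ [_ [_ [_ [_ [_ [_ [hem _]]]]]]]]]] := hcc.
move: x y; apply: clear_ind => [x0|c x IH] y; last by rewrite !(hmulZl, hmulZr, hepsZ) IH mulrA.
move: y; apply: clear_ind => [y0|c y IH]; last by rewrite !(hmulZl, hmulZr, hepsZ) IH; ring.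
by rewrite map_hmul !map_heps hem rmorphM.
Qed.

Lemma heuK : heps HK (hu HK) = 1.
Proof.
have [_ [_ [_ [_ [_ [_ [_ [_ [_ [_ [heu _]]]]]]]]]]] := hcc.
by rewrite [hu HK]/= map_heps heu rmorph1.
Qed.

Lemma pgK : prim_generated H -> prim_generated HK.
Proof.
move=> hpg P hprim hu1 hadd hmul1 hscal.
apply: clear_ind => [y|c x hx]; last exact: hscal.
move: y; apply: (hpg (fun y => P (map_mx f y))).
- by move=> y hy; apply: hprim; apply/map_primitive.
- exact: hu1.
- by move=> x y hx hy; rewrite map_mxD; apply: hadd.
- by move=> x y hx hy; rewrite -map_hmul; apply: hmul1.
- by move=> c x hx; rewrite map_mxZ; apply: hscal.
Qed.
End OneH.
End Transfer.

Lemma hpow_exp (S : comNzRingType) m (H : hopf_data S m) (hH : ring_ax H) x k :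
  hpow H x k = (x : halg hH) ^+ k.
Proof. elim: k => [|k IH]; first by rewrite expr0. by rewrite exprS -IH. Qed.

Lemma prim_scale (S : comNzRingType) m (H : hopf_data S m) c x :
  primitive H x -> primitive H (c *: x).
Proof.
move=> hx; have := @primitive_lin S m H 1 (fun _ => x) (fun _ => c) (fun _ => hx).
by rewrite big_ord1.
Qed.

Section Basis.
Variables (R : idomainType) (K : fieldType) (f : {rmorphism R -> K}).
Hypotheses (finj : injective f)
  (frac : forall x : K, exists a b : R, b != 0 /\ x = f a / f b).
Variables (p n m : nat) (H : hopf_data R m) (hcc : is_cc_hopf H).
Variables (t : 'I_n -> 'rV[R]_m) (A : 'M[R]_n).
Hypothesis (hb : assoc_matrix p H t A).
Local Notation HK := (hopf_map f H).
Let tK i := map_mx f (t i).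

Lemma primK i : primitive HK (tK i).
Proof. by apply/map_primitive => //; have [[]] := hb. Qed.

Lemma epsK i : heps HK (tK i) = 0.
Proof. by rewrite /tK map_heps (heps_prim hcc) ?rmorph0 //; have [[]] := hb. Qed.

Lemma indK (c : 'I_n -> K) : \sum_i c i *: tK i = 0 -> forall i, c i = 0.
Proof.
have [[_ hind _] _] := hb.
have [b [y [hb0 ey]]] := clear_den finj frac (\row_i c i).
have ec : forall i, c i = (f b)^-1 * f (y 0 i).
  by move=> i; have := congr1 (fun v : 'rV[K]_n => v 0 i) ey; rewrite !mxE.
have fb := f_neq0 finj hb0.
move=> e0.
have e1' : (f b)^-1 *: map_mx f (\sum_i y 0 i *: t i) = 0.
  rewrite map_mx_sum scaler_sumr -[RHS]e0; apply: eq_bigr => i _.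
  by rewrite map_mxZ scalerA ec.
have e1 : map_mx f (\sum_i y 0 i *: t i) = 0.
  by move/eqP: e1'; rewrite scalemx_eq0 invr_eq0 (negbTE fb) /= => /eqP.
have e2 : \sum_i y 0 i *: t i = 0.
  by apply: (@map_inj _ _ _ finj 1 m); rewrite e1 map_mx0.
by move=> i; rewrite ec (hind _ e2) rmorph0 mulr0.
Qed.

Lemma spanK x : primitive HK x -> exists c : 'I_n -> K, x = \sum_i c i *: tK i.
Proof.
have [[_ _ hsp] _] := hb.
move=> hx; have [b [y [hb0 ey]]] := clear_den finj frac x.
have fb := f_neq0 finj hb0.
have ey' : map_mx f y = f b *: x by rewrite ey scalerA mulfV // scale1r.
have hy : primitive H y by apply/(map_primitive finj); rewrite ey'; apply: prim_scale.
have [d ed] := hsp y hy.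
exists (fun i => (f b)^-1 * f (d i)).
rewrite ey ed map_mx_sum scaler_sumr; apply: eq_bigr => i _.
by rewrite map_mxZ scalerA.
Qed.

Lemma powK (hK : ring_ax HK) i :
  (tK i : halg hK) ^+ p = \sum_j (map_mx f A) j i *: (tK j : halg hK).
Proof.
have [_ hp] := hb.
rewrite -hpow_exp /tK map_hpow hp map_mx_sum; apply: eq_bigr => j _.
by rewrite map_mxZ mxE.
Qed.
End Basis.

Unset Implicit Arguments.
Set Strict Implicit.

Theorem proposition4p1 (R : idomainType) (K : fieldType) (f : {rmorphism R -> K})
  (p n : nat) (H1 H2 : hopf_data R (p ^ n))
  (t1 t2 : 'I_n -> 'rV[R]_(p ^ n)) (A B : 'M[R]_n) :
  is_dvr R -> is_frac_field f -> p \in [pchar R] ->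
  pg_hopf H1 -> pg_hopf H2 ->
  assoc_matrix p H1 t1 A -> assoc_matrix p H2 t2 B ->
  (exists M : 'M[K]_(p ^ n), hopf_iso (hopf_map f H1) (hopf_map f H2) M) <->
  (exists Theta : 'M[K]_n, Theta \in unitmx /\
     Theta *m map_mx f A = map_mx f B *m map_mx (fun x => x ^+ p) Theta).
Proof.
move=> _ [finj frac] pchR [cc1 pg1] [cc2 pg2] hb1 hb2.
have pch : p \in [pchar K] := rmorph_pchar f pchR.
have hK1 := ringK finj frac cc1.
have hK2 := ringK finj frac cc2.
split.
- move=> [M hiso].
  apply: (forward pch (hH1 := hK1) (hH2 := hK2) (powK hb1 hK1) (powK hb2 hK2)
           (spanK finj frac hb1) (spanK finj frac hb2) (primK finj hb1) (primK finj hb2)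
           (indK finj frac hb1) (indK finj frac hb2) hiso).
- move=> [Th [hThu hTh]].
  apply: (backward pch (hH1 := hK1) (hH2 := hK2) (powK hb1 hK1) (powK hb2 hK2)
           (pgK finj frac pg1) (pgK finj frac pg2)
           (spanK finj frac hb1) (spanK finj frac hb2) (primK finj hb2)
           (epsK f cc1 hb1) (epsK f cc2 hb2)
           (hcK finj frac cc1) (hcK finj frac cc2) (hcuK f cc1) (hcuK f cc2)
           (hemK finj frac cc1) (hemK finj frac cc2) (heuK f cc1) (heuK f cc2) hThu hTh).
Qed.
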